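(* Let $(\mathcal{A},\mathcal{E})$ be an exact category and let $X\xrightarrow{f}Y\xrightarrow{g}Z$ be a short exact sequence in $\mathcal{E}$ whose three objects are $\mathcal{E}$-finite. Then $l_\mathcal{E}(Y)\ge l_\mathcal{E}(X)+l_\mathcal{E}(Z)$.
   Context: $(\mathcal{A},\mathcal{E})$ is a Quillen exact category; admissible monics are morphisms $i$ with $(i,d)\in\mathcal{E}$ for some $d$. The $\mathcal{E}$-length $l_\mathcal{E}(X)\in\mathbb{N}\cup\{\infty\}$ is the supremum of all $n$ such that there is a chain $0=X_0\to X_1\to\cdots\to X_n=X$ of admissible monics none of which is an isomorphism; $X$ is $\mathcal{E}$-finite if $l_\mathcal{E}(X)<\infty$. *)

(* Defs.v *)
From HB Require Import structures.
From mathcomp Require Import all_boot all_order ssralg.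
From Stdlib Require Import ClassicalEpsilon.

Set Implicit Arguments.
Unset Strict Implicit.
Unset Printing Implicit Defensive.
Import GRing.Theory.
Local Open Scope ring_scope.

Record PreaddCat := {
  Obj :> Type;
  Mor : Obj -> Obj -> zmodType;
  idm : forall X, Mor X X;
  comp : forall X Y Z, Mor Y Z -> Mor X Y -> Mor X Z;
  compA : forall X Y Z W (h : Mor Z W) (g : Mor Y Z) (f : Mor X Y),
      comp h (comp g f) = comp (comp h g) f;
  comp1m : forall X Y (f : Mor X Y), comp (idm Y) f = f;
  compm1 : forall X Y (f : Mor X Y), comp f (idm X) = f;
  compDl : forall X Y Z (g1 g2 : Mor Y Z) (f : Mor X Y),
      comp (g1 + g2) f = comp g1 f + comp g2 f;
  compDr : forall X Y Z (g : Mor Y Z) (f1 f2 : Mor X Y),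
      comp g (f1 + f2) = comp g f1 + comp g f2
}.

Arguments Mor {C} X Y : rename.
Arguments idm {C} X : rename.
Arguments comp {C X Y Z} g f : rename.

Section Defs.
Variable C : PreaddCat.

Definition is_zero_obj (Z : C) : Prop := idm Z = 0.

Definition is_iso (X Y : C) (f : Mor X Y) : Prop :=
  exists g : Mor Y X, comp g f = idm X /\ comp f g = idm Y.

Definition additive : Prop :=
  (exists Z : C, is_zero_obj Z) /\
  forall X Y : C, exists (P : C) (i1 : Mor X P) (p1 : Mor P X)
                         (i2 : Mor Y P) (p2 : Mor P Y),
    [/\ comp p1 i1 = idm X, comp p2 i2 = idm Y, comp p1 i2 = 0,
        comp p2 i1 = 0 & comp i1 p1 + comp i2 p2 = idm P].

Definition is_kernel (X Y Z : C) (i : Mor X Y) (d : Mor Y Z) : Prop :=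
  comp d i = 0 /\
  forall W (h : Mor W Y), comp d h = 0 -> exists! u : Mor W X, comp i u = h.

Definition is_cokernel (X Y Z : C) (i : Mor X Y) (d : Mor Y Z) : Prop :=
  comp d i = 0 /\
  forall W (h : Mor Y W), comp h i = 0 -> exists! u : Mor Z W, comp u d = h.

(** A class of composable pairs (the candidate short exact sequences). *)
Definition pair_class := forall X Y Z : C, Mor X Y -> Mor Y Z -> Prop.

Definition adm_monic (E : pair_class) (X Y : C) (i : Mor X Y) : Prop :=
  exists (Z : C) (d : Mor Y Z), E X Y Z i d.

Definition adm_epic (E : pair_class) (Y Z : C) (d : Mor Y Z) : Prop :=
  exists (X : C) (i : Mor X Y), E X Y Z i d.

(** Exact structure (Quillen; axioms as in Buehler, "Exact categories", Def. 2.1). *)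
Definition exact_structure (E : pair_class) : Prop :=
  [/\
      (forall X Y Z (i : Mor X Y) (d : Mor Y Z),
          E X Y Z i d -> is_kernel i d /\ is_cokernel i d),
      (forall X Y Z X' Y' Z' (i : Mor X Y) (d : Mor Y Z) (i' : Mor X' Y')
              (d' : Mor Y' Z') (a : Mor X X') (b : Mor Y Y') (c : Mor Z Z'),
          E X Y Z i d -> is_iso a -> is_iso b -> is_iso c ->
          comp b i = comp i' a -> comp c d = comp d' b -> E X' Y' Z' i' d'),
      (forall A : C, adm_monic E (idm A)) /\ (forall A : C, adm_epic E (idm A)),
      (forall X Y Z (f : Mor X Y) (g : Mor Y Z),
          adm_monic E f -> adm_monic E g -> adm_monic E (comp g f)) /\
      (forall X Y Z (f : Mor X Y) (g : Mor Y Z),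
          adm_epic E f -> adm_epic E g -> adm_epic E (comp g f)) &
      (forall A B A' (i : Mor A B) (f : Mor A A'), adm_monic E i ->
          exists (B' : C) (i' : Mor A' B') (f' : Mor B B'),
            [/\ comp f' i = comp i' f,
                (forall W (g : Mor B W) (h : Mor A' W), comp g i = comp h f ->
                   exists! u : Mor B' W, comp u f' = g /\ comp u i' = h)
              & adm_monic E i']) /\
      (forall B C' C0 (p : Mor B C0) (f : Mor C' C0), adm_epic E p ->
          exists (B' : C) (p' : Mor B' C') (f' : Mor B' B),
            [/\ comp p f' = comp f p',
                (forall W (g : Mor W B) (h : Mor W C'), comp p g = comp f h ->
                   exists! u : Mor W B', comp f' u = g /\ comp p' u = h)
              & adm_epic E p'])].

Definition has_chain (E : pair_class) (X : C) (n : nat) : Prop :=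
  exists (obj : nat -> C) (m : forall k, Mor (obj k) (obj k.+1)),
    [/\ is_zero_obj (obj 0%N), obj n = X &
        forall k, (k < n)%N -> adm_monic E (m k) /\ ~ is_iso (m k)].

(** E-length in N u {oo}, encoded as option nat (None = oo): the supremum of
    the lengths of chains. *)
Definition lE (E : pair_class) (X : C) : option nat :=
  match excluded_middle_informative
          (exists n, has_chain E X n /\ forall k, has_chain E X k -> (k <= n)%N) with
  | left H => Some (proj1_sig (constructive_indefinite_description _ H))
  | right _ => None
  end.

Definition E_finite (E : pair_class) (X : C) : Prop := lE E X <> None.

End Defs.

Definition addinf (a b : option nat) : option nat :=
  match a, b with Some x, Some y => Some (x + y)%N | _, _ => None end.

Definition leinf (a b : option nat) : Prop :=
  match a, b with
  | _, None => True
  | None, Some _ => False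
  | Some x, Some y => (x <= y)%N
  end.

(* Main.v *)
From Pilot Require Import Defs.
From HB Require Import structures.
From mathcomp Require Import all_boot all_order ssralg.
From Stdlib Require Import ClassicalEpsilon.

Set Implicit Arguments.
Unset Strict Implicit.
Unset Printing Implicit Defensive.
Import GRing.Theory.
Local Open Scope ring_scope.
Local Notation comp := Pilot.Defs.comp.
Local Notation additive := Pilot.Defs.additive.
Local Notation compA := Pilot.Defs.compA.
Local Notation comp1m := Pilot.Defs.comp1m.
Local Notation compm1 := Pilot.Defs.compm1.
Local Notation compDl := Pilot.Defs.compDl.
Local Notation compDr := Pilot.Defs.compDr.

Lemma comp0m {C : PreaddCat} (X Y Z : C) (f : Mor X Y) : comp (0 : Mor Y Z) f = 0.
Proof.
have H := compDl (0 : Mor Y Z) 0 f; rewrite addr0 in H.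
by apply: (addrI (comp (0 : Mor Y Z) f)); rewrite addr0 -H.
Qed.

Lemma compm0 {C : PreaddCat} (X Y Z : C) (g : Mor Y Z) : comp g (0 : Mor X Y) = 0.
Proof.
have H := compDr g (0 : Mor X Y) 0; rewrite addr0 in H.
by apply: (addrI (comp g (0 : Mor X Y))); rewrite addr0 -H.
Qed.

Lemma into_zero {C : PreaddCat} (T Z : C) (b : Mor T Z) : is_zero_obj Z -> b = 0.
Proof. by move=> HZ; rewrite -(comp1m b) HZ comp0m. Qed.

Lemma outof_zero {C : PreaddCat} (T Z : C) (b : Mor Z T) : is_zero_obj Z -> b = 0.
Proof. by move=> HZ; rewrite -(compm1 b) HZ compm0. Qed.

Definition monic {C : PreaddCat} {X Y : C} (i : Mor X Y) :=
  forall T (a b : Mor T X), comp i a = comp i b -> a = b.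
Definition epic {C : PreaddCat} {Y Z : C} (d : Mor Y Z) :=
  forall T (a b : Mor Z T), comp a d = comp b d -> a = b.

Lemma kernel_monic {C : PreaddCat} (X Y Z : C) (i : Mor X Y) (d : Mor Y Z) :
  is_kernel i d -> monic i.
Proof.
move=> [Hdi Hk] T a b Hab.
have Hh : comp d (comp i a) = 0 by rewrite compA Hdi comp0m.
have [u [_ Hu]] := Hk _ _ Hh.
by rewrite -(Hu a erefl) (Hu b (esym Hab)).
Qed.

Lemma cokernel_epic {C : PreaddCat} (X Y Z : C) (i : Mor X Y) (d : Mor Y Z) :
  is_cokernel i d -> epic d.
Proof.
move=> [Hdi Hk] T a b Hab.
have Hh : comp (comp a d) i = 0 by rewrite -compA Hdi compm0.
have [u [_ Hu]] := Hk _ _ Hh.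
by rewrite -(Hu a erefl) (Hu b (esym Hab)).
Qed.

Definition pb {C : PreaddCat} {B C0 A' P : C} (p : Mor B C0) (x : Mor A' C0)
  (a : Mor P B) (b : Mor P A') :=
  comp p a = comp x b /\
  forall W (g : Mor W B) (h : Mor W A'), comp p g = comp x h ->
    exists! u : Mor W P, comp a u = g /\ comp b u = h.

Lemma pb_kernel {C : PreaddCat} (B C0 A' P V : C) (p : Mor B C0) (x : Mor A' C0)
  (a : Mor P B) (b : Mor P A') (d : Mor C0 V) :
  pb p x a b -> is_kernel x d -> is_kernel a (comp d p).
Proof.
move=> [Hsq Hu] Hk; have Hm := kernel_monic Hk; case: Hk => Hdx Hk.
split; first by rewrite -compA Hsq compA Hdx comp0m.
move=> W t Ht.
have Ht' : comp d (comp p t) = 0 by rewrite compA.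
have [s [Hs Hsu]] := Hk _ _ Ht'.
have [v [[Hv1 Hv2] Hvu]] := Hu _ t s (esym Hs).
exists v; split => // v' Hv'.
apply: Hvu; split => //; apply: Hm.
by rewrite Hs -Hv' !compA Hsq.
Qed.

Lemma kernel_iso {C : PreaddCat} (X X' Y Z : C) (i : Mor X Y) (i' : Mor X' Y)
  (d : Mor Y Z) : is_kernel i d -> is_kernel i' d ->
  exists a : Mor X' X, is_iso a /\ comp i a = i'.
Proof.
move=> Hk Hk'; have Hm := kernel_monic Hk; have Hm' := kernel_monic Hk'.
case: Hk => Hd Hk; case: Hk' => Hd' Hk'.
have [a [Ha _]] := Hk _ _ Hd'.
have [a' [Ha' _]] := Hk' _ _ Hd.
exists a; split => //; exists a'; split.
  by apply: Hm'; rewrite compA Ha' Ha compm1.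
by apply: Hm; rewrite compA Ha Ha' compm1.
Qed.

Lemma KA {C : PreaddCat} (E : pair_class C) (HE : exact_structure E) (X Y Z : C)
  (i : Mor X Y) (d : Mor Y Z) : is_kernel i d -> adm_epic E d -> adm_monic E i.
Proof.
case: HE => Hkc Hiso _ _ _ Hk [K [k HEk]].
have [Hkk _] := Hkc _ _ _ _ _ HEk.
have [a [[a' [Ha1 Ha2]] Hka]] := kernel_iso Hkk Hk.
exists Z, d; apply: (Hiso _ _ _ _ _ _ k d i d a' (idm Y) (idm Z) HEk).
- by exists a; split.
- by exists (idm Y); rewrite comp1m.
- by exists (idm Z); rewrite comp1m.
- by rewrite comp1m -Hka -compA Ha2 compm1.
- by rewrite comp1m compm1.
Qed.

Lemma iso_adm {C : PreaddCat} (E : pair_class C) (HE : exact_structure E) (A B : C)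
  (a : Mor A B) : is_iso a -> adm_monic E a.
Proof.
case: HE => Hkc Hiso [E0 _] _ _ [a' [Ha1 Ha2]].
have [Z [d Hd]] := E0 A.
exists Z, (comp d a'); apply: (Hiso _ _ _ _ _ _ (idm A) d a (comp d a') (idm A) a (idm Z) Hd).
- by exists (idm A); rewrite comp1m.
- by exists a'.
- by exists (idm Z); rewrite comp1m.
- by [].
- by rewrite comp1m -compA Ha1 compm1.
Qed.

Inductive ch {C : PreaddCat} (E : pair_class C) : C -> nat -> Prop :=
| ch0 : forall A : C, is_zero_obj A -> ch E A 0
| chS : forall (A B : C) n (h : Mor A B), ch E A n -> adm_monic E h ->
    ~ is_iso h -> ch E B n.+1.

Inductive pth {C : PreaddCat} (E : pair_class C) : C -> C -> nat -> Prop :=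
| p0 : forall A, pth E A A 0
| pS : forall A A' B n (h : Mor A A'), adm_monic E h -> ~ is_iso h ->
    pth E A' B n -> pth E A B n.+1.

Lemma pth_snoc {C : PreaddCat} (E : pair_class C) A B n :
  pth E A B n -> forall B' (h : Mor B B'), adm_monic E h -> ~ is_iso h ->
  pth E A B' n.+1.
Proof.
elim=> [A0|A0 A1 B0 n0 h0 H1 H2 _ IH] B' h Hm Hi.
  by apply: pS Hm Hi (p0 _ _).
by apply: pS H1 H2 (IH _ _ Hm Hi).
Qed.

Lemma ch_pth {C : PreaddCat} (E : pair_class C) B n :
  ch E B n -> exists A, is_zero_obj A /\ pth E A B n.
Proof.
elim=> [A HA|A B0 n0 h _ [A0 [HA0 Hp]] Hm Hi].
  by exists A; split => //; apply: p0.
by exists A0; split => //; apply: pth_snoc Hp _ _ Hm Hi.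
Qed.

Definition ocons {C : PreaddCat} (A : C) (f : nat -> C) : nat -> C :=
  fun k => match k with 0 => A | S k => f k end.

Lemma pth_G {C : PreaddCat} (E : pair_class C) A B n : pth E A B n ->
  exists (obj : nat -> C) (m : forall k, Mor (ocons A obj k) (ocons A obj k.+1)),
    ocons A obj n = B /\
    forall k, (k < n)%N -> adm_monic E (m k) /\ ~ is_iso (m k).
Proof.
elim=> [A0|A0 A1 B0 n0 h Hm Hi _ [obj [m [Hn Hk]]]].
  exists (fun _ => A0).
  exists (fun k => match k return Mor (ocons A0 (fun _ => A0) k)
                                    (ocons A0 (fun _ => A0) k.+1) with
                   | 0 => idm A0 | S _ => idm A0 end).
  by split.
exists (ocons A1 obj).
exists (fun k => match k return Mor (ocons A0 (ocons A1 obj) k)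
                                  (ocons A0 (ocons A1 obj) k.+1) with
                 | 0 => h | S k => m k end).
split => // -[|k] Hk' //=; exact: Hk.
Qed.

Lemma ch_has {C : PreaddCat} (E : pair_class C) B n : ch E B n -> has_chain E B n.
Proof.
move=> /ch_pth [A [HA /pth_G [obj [m [Hn Hk]]]]].
by exists (ocons A obj), m; split.
Qed.

Lemma has_ch {C : PreaddCat} (E : pair_class C) B n : has_chain E B n -> ch E B n.
Proof.
move=> [obj [m [Hz Hn Hm]]].
have H : forall k, (k <= n)%N -> ch E (obj k) k.
  elim=> [_|k IH Hk]; first exact: ch0.
  have [H1 H2] := Hm k Hk.
  exact: chS (IH (ltnW Hk)) H1 H2.
by rewrite -Hn; apply: H.
Qed.

Lemma ch_iso {C : PreaddCat} (E : pair_class C) (HE : exact_structure E) P N :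
  ch E P N -> forall Y (a : Mor P Y), is_iso a -> ch E Y N.
Proof.
case=> [A HA|A B n h Hc Hm Hi] Y a [a' [Ha1 Ha2]].
  apply: ch0; rewrite /is_zero_obj -Ha2.
  by rewrite (outof_zero a HA) comp0m.
apply: (chS (h := comp a h)) => //.
  have [_ _ _ [E1 _] _] := HE.
  apply: E1 => //; apply: iso_adm => //; by exists a'.
move=> [j [Hj1 Hj2]]; apply: Hi; exists (comp j a); split.
  by rewrite -compA.
rewrite -(comp1m (comp h (comp j a))) -Ha1 -!compA (compA a h) (compA _ j).
by rewrite Hj2 comp1m.
Qed.

Lemma paste {C : PreaddCat} (Y Z W W' P P' : C) (g : Mor Y Z) (w' : Mor W' Z)
  (h : Mor W W') (e : Mor P Y) (q : Mor P W) (e' : Mor P' Y) (q' : Mor P' W')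
  (u : Mor P P') :
  pb g w' e' q' -> pb g (comp w' h) e q -> comp e' u = e -> comp q' u = comp h q ->
  pb q' h u q.
Proof.
move=> [Hsq' Hu'] [Hsq Hu] Heu Hqu; split => // T t s Hts.
have Hc : comp g (comp e' t) = comp (comp w' h) s.
  by rewrite compA Hsq' -compA Hts compA.
have [v [[Hv1 Hv2] Hvu]] := Hu _ _ _ Hc.
have Hc' : comp g (comp e' t) = comp w' (comp q' t) by rewrite !compA Hsq'.
have [z [_ Hzu]] := Hu' _ _ _ Hc'.
exists v; split.
  split => //; rewrite -(Hzu t (conj erefl erefl)); apply/esym/Hzu; split.
    by rewrite compA Heu.
  by rewrite compA Hqu -compA Hv2 Hts.
move=> v' [Hv1' Hv2']; apply: Hvu; split => //.
by rewrite -Heu -compA Hv1'.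
Qed.

Lemma main_step {C : PreaddCat} (E : pair_class C) (HE : exact_structure E)
  (X Y Z : C) (f : Mor X Y) (g : Mor Y Z) (Hfg : E X Y Z f g) n (HXn : ch E X n) :
  forall W k, ch E W k -> forall w : Mor W Z, adm_monic E w ->
  exists P (e : Mor P Y) (q : Mor P W), [/\ pb g w e q, epic q & ch E P (n + k)].
Proof.
have HE' := HE; case: HE' => Hkc Hiso _ [E1 E1op] [_ E2op].
have [[Hgf Hkf] _] := Hkc _ _ _ _ _ Hfg.
move=> W0 kk0 Hc0; elim: Hc0 => [W HW|W W' k h Hc IH Hh Hhi] w Hw.
  exists X, f, 0; split; last by rewrite addn0.
  - split; first by rewrite Hgf compm0.
    move=> T a b Hab.
    have Hb := into_zero b HW.
    have Ha : comp g a = 0 by rewrite Hab Hb compm0.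
    have [u [Hu Huu]] := Hkf _ _ Ha.
    exists u; split; first by split => //; rewrite Hb comp0m.
    by move=> u' [Hu' _]; apply: Huu.
  - by move=> T a b _; rewrite (outof_zero a HW) (outof_zero b HW).
have Hw2 : adm_monic E (comp w h) by apply: E1.
have [P [e [q [[Hsq Hu] Hq Hch]]]] := IH _ Hw2.
have Hg : adm_epic E g by exists X, f.
have [P' [q' [e' [Hsq' Hu' Hq']]]] := E2op _ _ _ g w Hg.
have Hc' : comp g e = comp w (comp h q) by rewrite Hsq compA.
have [u [[Heu Hqu] _]] := Hu' _ _ _ Hc'.
have Hpb := paste (conj Hsq' Hu') (conj Hsq Hu) Heu Hqu.
have [V [r Hr]] := Hh.
have [Hkr _] := Hkc _ _ _ _ _ Hr.
have Hku := pb_kernel Hpb Hkr.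
have Hepi' : epic q'.
  have [K [k0 Hk0]] := Hq'.
  by have [_ Hck] := Hkc _ _ _ _ _ Hk0; apply: cokernel_epic Hck.
exists P', e', q'; split => //.
rewrite addnS; apply: (chS (h := u)) Hch _ _.
  apply: KA Hku _ => //; apply: E1op => //; by exists W, h.
move=> [u' [Hu1 Hu2]]; apply: Hhi.
have Hhe : epic h.
  move=> T a b Hab; apply: Hepi'.
  rewrite -(compm1 (comp a q')) -(compm1 (comp b q')) -Hu2 !compA.
  rewrite -(compA a) -(compA b) Hqu !compA Hab; done.
have Hm := kernel_monic Hkr.
case: Hkr => Hrh Hkr.
have Hr0 : r = 0 by apply: Hhe; rewrite Hrh comp0m.
have Hid : comp r (idm W') = 0 by rewrite Hr0 comp0m.
have [v [Hv _]] := Hkr _ _ Hid.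
exists v; split => //.
by apply: Hm; rewrite compA Hv comp1m compm1.
Qed.

Lemma lE_spec {C : PreaddCat} (E : pair_class C) (X : C) n :
  lE E X = Some n -> has_chain E X n /\ forall k, has_chain E X k -> (k <= n)%N.
Proof.
rewrite /lE; case: excluded_middle_informative => [H|H] //.
by move=> [<-]; exact: (proj2_sig (constructive_indefinite_description _ H)).
Qed.

Lemma pb_id_iso {C : PreaddCat} (Y Z P : C) (g : Mor Y Z) (e : Mor P Y) (q : Mor P Z) :
  pb g (idm Z) e q -> is_iso e.
Proof.
move=> [Hsq Hu].
have Hc : comp g (idm Y) = comp (idm Z) g by rewrite comp1m compm1.
have [v [[Hv1 Hv2] _]] := Hu _ _ _ Hc.
rewrite comp1m in Hsq.
have Hc' : comp g e = comp (idm Z) q by rewrite comp1m.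
have [z [_ Hzu]] := Hu _ _ _ Hc'.
exists v; split => //.
have E1 : z = idm P by apply: Hzu; split; rewrite compm1.
have E2 : z = comp v e.
  by apply: Hzu; split; rewrite compA ?Hv1 ?Hv2 ?comp1m.
by rewrite -E2 E1.
Qed.

Theorem theorem6p4 (C : PreaddCat) (HC : additive C) (E : pair_class C)
  (HE : exact_structure E) (X Y Z : C) (f : Mor X Y) (g : Mor Y Z)
  (Hfg : E X Y Z f g)
  (HX : E_finite E X) (HY : E_finite E Y) (HZ : E_finite E Z) :
  leinf (addinf (lE E X) (lE E Z)) (lE E Y).
Proof.
case HXe: (lE E X) HX => [a|] // _.
case HZe: (lE E Z) HZ => [c|] // _.
case HYe: (lE E Y) HY => [b|] // _ /=.
have [HXa _] := lE_spec HXe.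
have [HZc _] := lE_spec HZe.
have [_ HYb] := lE_spec HYe.
apply: HYb.
have HZid : adm_monic E (idm Z) by case: HE => _ _ [E0 _] _ _; apply: E0.
have [P [e [q [Hpb _ Hch]]]] := main_step HE Hfg (has_ch HXa) (has_ch HZc) HZid.
exact/ch_has/(ch_iso HE Hch (pb_id_iso Hpb)).
Qed.
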